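(* Let $A$ be a unital ring and $p\in A$ a full idempotent, and suppose $\sum_{i=1}^n a_ipb_i=1$ for some $a_1,\dots,a_n,b_1,\dots,b_n\in A$. Then $\operatorname{sr}(pAp)\le n\cdot\operatorname{sr}(A)-n+1$.
   Context: An idempotent $p$ in a unital ring $A$ is full if $ApA=A$. A row $(a_1,\dots,a_n)\in A^n$ is right unimodular if $\sum_{i=1}^n a_iA=A$. A row $(a_1,\dots,a_n,b)\in A^{n+1}$ is reducible if there exist $c_1,\dots,c_n\in A$ such that $(a_1+bc_1,\dots,a_n+bc_n)$ is right unimodular. The (Bass) stable rank $\operatorname{sr}(A)$ is the least positive integer $n$ such that every right unimodular row in $A^{n+1}$ is reducible, or $\infty$ if no such $n$ exists (with the convention that the inequality is trivial if $\operatorname{sr}(A)=\infty$). *)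

(* Defs.v *)
From HB Require Import structures.
From mathcomp Require Import all_boot all_order all_algebra.
Set Implicit Arguments. Unset Strict Implicit. Unset Printing Implicit Defensive.
Import GRing.Theory.
Local Open Scope ring_scope.

Definition right_unimodular (R : pzRingType) (k : nat) (a : 'I_k -> R) : Prop :=
  exists c : 'I_k -> R, \sum_(i < k) a i * c i = 1.

Definition reducible (R : pzRingType) (m : nat) (v : 'I_m.+1 -> R) : Prop :=
  exists c : 'I_m -> R,
    right_unimodular (fun i : 'I_m => v (widen_ord (leqnSn m) i) + v ord_max * c i).

Definition bass_cond (R : pzRingType) (m : nat) : Prop :=
  forall v : 'I_m.+1 -> R, right_unimodular v -> reducible v.

Definition stable_rank_eq (R : pzRingType) (s : nat) : Prop :=
  [/\ (0 < s)%N, bass_cond R s & forall m, (0 < m < s)%N -> ~ bass_cond R m].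

Definition stable_rank_le (R : pzRingType) (k : nat) : Prop :=
  exists m, [/\ (0 < m)%N, (m <= k)%N & bass_cond R m].

Definition full_idem (A : pzRingType) (p : A) : Prop :=
  p * p = p /\
  forall x : A, exists k (u v : 'I_k -> A), x = \sum_(i < k) u i * p * v i.

Record idem (A : pzRingType) := Idem { idem_val :> A; idem_valP : idem_val * idem_val == idem_val }.

Section Corner.
Variables (A : pzRingType) (e : idem A).
Local Notation q := (idem_val e).

(* The corner ring pAp = { y in A | p y p = y } (= { p x p | x in A } as p is
   idempotent), with the operations of A and unit p. *)
Record corner := Corner { cval : A; cvalP : q * cval * q == cval }.

HB.instance Definition _ := [isSub for cval].
HB.instance Definition _ := [Choice of corner by <:].

Let ee : q * q = q. Proof. exact/eqP/idem_valP. Qed.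
Let cE (x : corner) : q * cval x * q = cval x. Proof. exact/eqP/cvalP. Qed.

Let cL (x : corner) : q * cval x = cval x.
Proof. by rewrite -[in LHS](cE x) !mulrA ee. Qed.
Let cR (x : corner) : cval x * q = cval x.
Proof. by rewrite -[in LHS](cE x) -!mulrA ee mulrA. Qed.

Lemma corner0_subproof : q * 0 * q == 0.
Proof. by rewrite mulr0 mul0r. Qed.
Definition czero := Corner corner0_subproof.

Lemma cornerN_subproof (x : corner) : q * (- cval x) * q == - cval x.
Proof. by rewrite mulrN mulNr cE. Qed.
Definition copp (x : corner) := Corner (cornerN_subproof x).

Lemma cornerD_subproof (x y : corner) : q * (cval x + cval y) * q == cval x + cval y.
Proof. by rewrite mulrDr mulrDl !cE. Qed.
Definition cadd (x y : corner) := Corner (cornerD_subproof x y).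

Lemma cornerM_subproof (x y : corner) : q * (cval x * cval y) * q == cval x * cval y.
Proof. by rewrite mulrA cL -mulrA cR. Qed.
Definition cmul (x y : corner) := Corner (cornerM_subproof x y).

Lemma corner1_subproof : q * q * q == q.
Proof. by rewrite !ee. Qed.
Definition cone := Corner corner1_subproof.

Lemma caddA : associative cadd.
Proof. by move=> x y z; apply: val_inj; rewrite /= addrA. Qed.
Lemma caddC : commutative cadd.
Proof. by move=> x y; apply: val_inj; rewrite /= addrC. Qed.
Lemma cadd0 : left_id czero cadd.
Proof. by move=> x; apply: val_inj; rewrite /= add0r. Qed.
Lemma caddN : left_inverse czero copp cadd.
Proof. by move=> x; apply: val_inj; rewrite /= addNr. Qed.

HB.instance Definition _ := GRing.isZmodule.Build corner caddA caddC cadd0 caddN.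

Lemma cmulA : associative cmul.
Proof. by move=> x y z; apply: val_inj; rewrite /= mulrA. Qed.
Lemma cmul1 : left_id cone cmul.
Proof. by move=> x; apply: val_inj; rewrite /= cL. Qed.
Lemma cmulr1 : right_id cone cmul.
Proof. by move=> x; apply: val_inj; rewrite /= cR. Qed.
Lemma cmulDl : left_distributive cmul cadd.
Proof. by move=> x y z; apply: val_inj; rewrite /= mulrDl. Qed.
Lemma cmulDr : right_distributive cmul cadd.
Proof. by move=> x y z; apply: val_inj; rewrite /= mulrDr. Qed.

HB.instance Definition _ := GRing.Zmodule_isPzRing.Build corner cmulA cmul1 cmulr1 cmulDl cmulDr.

End Corner.

(* Main.v *)
Require Import Defs.
From HB Require Import structures.
From mathcomp Require Import all_boot all_order all_algebra.
From mathcomp Require Import zify.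
Set Implicit Arguments. Unset Strict Implicit. Unset Printing Implicit Defensive.
Import GRing.Theory.
Local Open Scope ring_scope.

Lemma split_sum (V : nmodType) (n t : nat) (F : nat -> V) :
  \sum_(j < n * t) F j = \sum_(k < t) \sum_(i < n) F (n * k + i)%N.
Proof.
elim: t => [|t IH]; first by rewrite muln0 !big_ord0.
rewrite mulnSr big_split_ord /= IH big_ord_recr /=.
by congr (_ + _); apply: eq_bigr => i _.
Qed.

Lemma idx_facts n t k i : (k < t)%N -> (i < n)%N ->
  [/\ (n*k+i < n*t)%N, ((n*k+i) %/ n = k)%N & ((n*k+i) %% n = i)%N].
Proof.
move=> kt ilt; split.
- have : (n * k.+1 <= n * t)%N by rewrite leq_mul2l kt orbT.
  rewrite mulnS; lia.
- by rewrite mulnC divnMDl ?(leq_ltn_trans _ ilt) // divn_small // addn0.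
- by rewrite mulnC modnMDl modn_small.
Qed.

Definition ext (R : zmodType) (n : nat) (f : 'I_n -> R) (i : nat) : R :=
  oapp f 0 (insub i : option 'I_n).

Lemma extE (R : zmodType) n (f : 'I_n -> R) (i : 'I_n) : ext f i = f i.
Proof. by rewrite /ext valK. Qed.

Lemma onemp (A : pzRingType) (p z : A) : p * p = p -> p * z = z -> (1 - p) * z = 0.
Proof. by move=> pp pz; rewrite mulrBl mul1r pz subrr. Qed.

Lemma perm6 (V : nmodType) (SZ wSC SRSC X we SRe : V) :
 SZ + (wSC + SRSC) + (X + (we + SRe)) = SZ + (SRSC + SRe) + wSC + (X + we).
Proof.
rewrite -!addrA; congr (SZ + _).
rewrite [wSC + _]addrC -!addrA; congr (SRSC + _).
by rewrite [RHS]addrA [RHS]addrC -!addrA.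
Qed.

Lemma key (A : pzRingType) (p : A) (pp : p * p = p) (n : nat) (a b : 'I_n -> A)
 (hab : \sum_(i < n) a i * p * b i = 1) (t : nat) (hB : bass_cond A t.+1)
 (x y : nat -> A) (x0 y0 : A) (hxl : forall j, p * x j = x j) (hxr : forall j, x j * p = x j)
 (hx0l : p * x0 = x0) (hx0r : x0 * p = x0)
 (hsum : \sum_(j < (n*t).+1) x j * y j + x0 * y0 = p) :
 exists c w : nat -> A, \sum_(j < (n*t).+1) (x j + x0 * (p * c j * p)) * w j = p.
Proof.
set N := (n * t)%N.
pose Z k := \sum_(i < n) x (n*k+i)%N * b i.
pose Zt := x N + (1 - p).
pose u k := \sum_(i < n) a i * p * y (n*k+i)%N.
pose ut := p * y N + (1 - p).
pose q k (i : nat) := p * y (n*k+i)%N - p * ext b i * u k.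
pose R k := \sum_(i < n) x (n*k+i)%N * q k i.
pose r := x0 * y0 + \sum_(k < t) R k.
pose V k := if (k < t)%N then Z k else if k == t then Zt else r.
pose U k := if (k < t)%N then u k else if k == t then ut else 1.
have hZR k : Z k * u k + R k = \sum_(i < n) x (n*k+i)%N * y (n*k+i)%N.
  rewrite /R /q.
  under eq_bigr do rewrite extE mulrBr !mulrA hxr.
  by rewrite sumrB /Z mulr_suml addrC subrK.
have hZt : Zt * ut = x N * y N + (1 - p).
  rewrite /Zt /ut mulrDl !mulrDr mulrA hxr.
  rewrite mulr1 mulrN hxr subrr addr0 mulrA (onemp pp pp) mul0r add0r.
  by rewrite mulr1 mulrN (onemp pp pp) oppr0 addr0.
have hunim : right_unimodular (fun j : 'I_t.+2 => V j).
  exists (fun j => U j).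
  rewrite big_ord_recr big_ord_recr /=.
  rewrite /V /U ltnn eqxx (leq_gtF (leqnSn t)) (gtn_eqF (ltnSn t)).
  rewrite (eq_bigr (fun i : 'I_t => Z i * u i)); last by move=> i _; rewrite ltn_ord.
  have hs : \sum_(k < t) (Z k * u k + R k) = \sum_(j < N) x j * y j.
    by rewrite /N (split_sum _ _ (fun j => x j * y j)); apply: eq_bigr => k _; rewrite hZR.
  rewrite big_split /= in hs.
  rewrite big_ord_recr /= -hs in hsum.
  rewrite mulr1 hZt /r.
  transitivity ((\sum_(i < t) Z i * u i + \sum_(i < t) R i + x N * y N + x0 * y0) + (1 - p)); last by rewrite hsum addrC subrK.
  set S1 := \sum_(i < t) Z i * u i; set S2 := \sum_(i < t) R i.
  set c1 := x N * y N; set c2 := x0 * y0; set e := 1 - p.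
  clearbody S1 S2 c1 c2 e.
  rewrite -!addrA; congr (S1 + _).
  rewrite [RHS]addrCA; congr (c1 + _).
  by rewrite addrC [c2 + S2]addrC addrA.
have hVr : V t.+1 = r by rewrite /V (leq_gtF (leqnSn t)) (gtn_eqF (ltnSn t)).
have [c [d hd]] := hB _ hunim.
move: hd => /=; rewrite hVr => hd.
pose Cn := ext c; pose Dn := ext d.
have hd2 : \sum_(k < t) (Z k + r * Cn k) * Dn k + (Zt + r * Cn t) * Dn t = 1.
  rewrite -[RHS]hd big_ord_recr /=; congr (_ + _).
    apply: eq_bigr => k _; rewrite /V ltn_ord.
    by rewrite /Cn /Dn (extE c (widen_ord _ k)) (extE d (widen_ord _ k)).
  by rewrite /V ltnn eqxx /Cn /Dn (extE c ord_max) (extE d ord_max).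
have hpZ k : p * Z k = Z k.
  by rewrite /Z mulr_sumr; apply: eq_bigr => i _; rewrite mulrA hxl.
have hpR k : p * R k = R k.
  by rewrite /R mulr_sumr; apply: eq_bigr => i _; rewrite mulrA hxl.
have hpr : p * r = r.
  by rewrite /r mulrDr mulrA hx0l mulr_sumr; congr (_ + _); apply: eq_bigr => k _; rewrite hpR.
have h1Zt : (1 - p) * Zt = 1 - p.
  rewrite /Zt mulrDr (onemp pp (hxl N)) add0r.
  by rewrite [in LHS]mulrBr mulr1 (onemp pp pp) subr0.
have h1p : (1 - p) * (Dn t * p) = 0.
  have := congr1 (fun z => (1 - p) * z * p) hd2 => /=.
  rewrite mulr1 (onemp pp pp) mulrDr mulr_sumr big1; last first.
    move=> k _; rewrite mulrA (onemp pp) ?mul0r //.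
    by rewrite mulrDr hpZ mulrA hpr.
  rewrite add0r mulrA mulrDr h1Zt mulrA (onemp pp hpr) mul0r addr0.
  by rewrite -mulrA.
have hpD : p * (Dn t * p) = Dn t * p.
  by move/eqP: h1p; rewrite mulrBl mul1r subr_eq0 => /eqP <-.
have rE : r = x0 * y0 + \sum_(k < t) R k by [].
have ZtE : Zt = x N + (1 - p) by [].
clear hd hVr hunim U V; clearbody r Zt.
have hq0 k : \sum_(i < n) a i * p * q k i = 0.
  rewrite /q; under eq_bigr do rewrite extE mulrBr !mulrA -!(mulrA _ p p) !pp.
  rewrite sumrB -mulr_suml hab mul1r.
  by rewrite /u; apply/eqP; rewrite subr_eq0.
pose P k := Dn k * p.
pose Dsum := \sum_(k < t.+1) Cn k * P k.
pose cc j := if (j < N)%N then y0 * Cn (j %/ n)%N * ext a (j %% n)%N else y0 * Cn t.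
pose ww j := if (j < N)%N then p * ext b (j %% n)%N * Dn (j %/ n)%N * p + q (j %/ n)%N (j %% n)%N * Dsum
             else p * Dn t * p.
exists cc, ww.
pose F j := (x j + x0 * (p * cc j * p)) * ww j.
change (\sum_(j < N.+1) F j = p).
rewrite big_ord_recr /= (split_sum _ _ F).
have hk (k : 'I_t) : \sum_(i < n) F (n * k + i)%N =
    Z k * P k + R k * Dsum + x0 * y0 * (Cn k * P k).
  rewrite (eq_bigr (fun i : 'I_n => x (n*k+i)%N * b i * P k + x (n*k+i)%N * q k i * Dsum
     + x0 * y0 * Cn k * (a i * p * b i) * P k + x0 * y0 * Cn k * (a i * p * q k i) * Dsum)); last first.
    move=> i _; have [h1 h2 h3] := idx_facts (ltn_ord k) (ltn_ord i).
    rewrite /F /cc /ww h1 h2 h3 !extE /P.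
    rewrite [LHS]mulrDl [in LHS]mulrDr [in LHS]mulrDr !mulrA !hxr hx0r -!(mulrA _ p p) !pp.
    by rewrite !addrA.
  rewrite !big_split /= -!mulr_suml -!mulr_sumr hab hq0 mulr1 mulr0 mul0r addr0.
  by rewrite -mulrA.
have hpD2 : p * Dn t * p = Dn t * p by rewrite -mulrA hpD.
have hpD' (X : A) : X * p * Dn t * p = X * Dn t * p.
  by rewrite -(mulrA X p) -(mulrA X) hpD2 mulrA.
have hFN : F N = x N * P t + x0 * y0 * Cn t * P t.
  by rewrite /F /cc /ww ltnn /P [LHS]mulrDl !mulrA !hxr hx0r !hpD'.
rewrite (eq_bigr _ (fun k _ => hk k)) hFN.
have hd3 : \sum_(k < t) (Z k * P k + r * (Cn k * P k)) + (x N * P t + r * (Cn t * P t)) = p.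
  rewrite -[RHS]mul1r -hd2 mulrDl mulr_suml; congr (_ + _).
    by apply: eq_bigr => k _; rewrite /P -mulrA mulrDl -mulrA.
  rewrite /P -mulrA mulrDl -mulrA; congr (_ + _).
  by rewrite ZtE mulrDl h1p addr0.
rewrite -hd3 !big_split /= -!mulr_suml -!mulr_sumr /Dsum big_ord_recr /= rE.
rewrite mulrDr !mulrDl -[x0 * y0 * Cn t * P t]mulrA.
by rewrite perm6.
Qed.

Lemma cval_sum (A : pzRingType) (e : idem A) k (F : 'I_k -> corner e) :
  cval (\sum_(i < k) F i) = \sum_(i < k) cval (F i).
Proof. by apply: (big_morph (@cval A e)). Qed.

Lemma cvalM (A : pzRingType) (e : idem A) (x y : corner e) : cval (x * y) = cval x * cval y.
Proof. by []. Qed.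
Lemma cvalD (A : pzRingType) (e : idem A) (x y : corner e) : cval (x + y) = cval x + cval y.
Proof. by []. Qed.
Lemma cval1 (A : pzRingType) (e : idem A) : cval (1 : corner e) = idem_val e.
Proof. by []. Qed.

Lemma idemE (A : pzRingType) (e : idem A) : idem_val e * idem_val e = idem_val e.
Proof. exact/eqP/idem_valP. Qed.

Lemma cornL (A : pzRingType) (e : idem A) (z : corner e) : idem_val e * cval z = cval z.
Proof. have h := eqP (cvalP z); by rewrite -[in LHS]h !mulrA idemE. Qed.
Lemma cornR (A : pzRingType) (e : idem A) (z : corner e) : cval z * idem_val e = cval z.
Proof. have h := eqP (cvalP z); by rewrite -[in LHS]h -!mulrA idemE !mulrA. Qed.

Lemma mkc_proof (A : pzRingType) (e : idem A) (z : A) :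
  idem_val e * (idem_val e * z * idem_val e) * idem_val e == idem_val e * z * idem_val e.
Proof. by rewrite !mulrA idemE -!mulrA idemE. Qed.
Definition mkc (A : pzRingType) (e : idem A) (z : A) : corner e := Corner (mkc_proof e z).

Lemma bass_corner (A : pzRingType) (p : idem A) (n : nat) (a b : 'I_n -> A)
  (hab : \sum_(i < n) a i * idem_val p * b i = 1) (t : nat) (hB : bass_cond A t.+1) :
  bass_cond (corner p) (n * t).+1.
Proof.
move=> v [cv hv].
have pp := idemE p.
pose x j := cval (ext v j); pose y j := cval (ext cv j).
pose x0 := cval (v ord_max); pose y0 := cval (cv ord_max).
have hsum : \sum_(j < (n*t).+1) x j * y j + x0 * y0 = idem_val p.
  rewrite -(cval1 p) -hv cval_sum [RHS]big_ord_recr /=; congr (_ + _).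
  apply: eq_bigr => j _.
  by rewrite /x /y (extE v (widen_ord _ j)) (extE cv (widen_ord _ j)).
have [c [w hcw]] := key pp hab hB (fun j => cornL (ext v j)) (fun j => cornR (ext v j))
  (cornL (v ord_max)) (cornR (v ord_max)) hsum.
exists (fun i => mkc p (c i)); exists (fun i => mkc p (w i)).
apply: val_inj; rewrite /= cval_sum.
transitivity ((\sum_(j < (n * t).+1) (cval (ext v j) + cval (v ord_max) * (idem_val p * c j * idem_val p)) * w j) * idem_val p); last by rewrite hcw pp.
rewrite mulr_suml; apply: eq_bigr => i _.
rewrite cvalM cvalD cvalM /= -(extE v (widen_ord (leqnSn _) i)) /=.
set X := cval (ext v i) + _.
have hXp : X * idem_val p = X.
  by rewrite /X mulrDl cornR -!mulrA pp.
by rewrite !mulrA hXp.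
Qed.

Theorem theorem8 (A : pzRingType) (p : idem A) (n : nat) (a b : 'I_n -> A) :
  full_idem (idem_val p) ->
  \sum_(i < n) a i * (idem_val p) * b i = 1 ->
  forall s : nat, stable_rank_eq A s ->
  stable_rank_le (corner p) (n * s - n + 1).
Proof.
move=> _ hab s [s0 hBs _].
case: s s0 hBs => [//|t] _ hBs.
exists (n * t).+1; split => //.
  by rewrite mulnSr addnK addn1.
exact (@bass_corner _ _ _ _ _ hab _ hBs).
Qed.
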